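(* For every $m\ge1$ and every $\theta\in(0,1]$, $\lim_{n\to\infty}\rho(\mathrm{IRV},m,n,\theta)=0$. Equivalently, the critical value of IRV in the Perturbed Culture model is $\theta_c(\mathrm{IRV},m)=0$.
   Context: A ranking is a strict total order on the candidates. A discrete profile consists of candidates, $n$ voters and a ranking $P_v$ per voter. For a set $K$ of candidates, $P_K$ restricts each ranking to $K$; the Plurality score $s_{\mathrm{Plu}}(c,P)$ is the number of voters ranking $c$ first. IRV: starting from all candidates, repeatedly eliminate a remaining candidate with minimal Plurality score in the profile restricted to the remaining candidates (ties broken by an arbitrary fixed rule); the last remaining candidate wins. CM: a rule $f$ is coalitionally manipulable in a discrete profile $P$ if there is a discrete $Q$ with the same candidates and voters such that $f(Q)\neq f(P)$ and every voter $v$ with $Q_v\ne P_v$ prefers $f(Q)$ to $f(P)$ according to $P_v$. Perturbed Culture ($m,n\ge1$, $\theta\in(0,1]$): random discrete profile with candidates $\{1,\dots,m\}$, voters $\{1,\dots,n\}$, each voter independently having ranking $1\succ\cdots\succ m$ with probability $\theta$ and a uniformly random ranking with probability $1-\theta$. $\rho(f,m,n,\theta)$: probability that $f$ is CM in the random profile. For a rule $f$, the critical value $\theta_c(f,m)$ (when it exists) is the common value of $\theta_l$, the largest value in $[0,1]$ such that $\theta<\theta_l$ implies $\lim_n\rho=1$, and $\theta_u$, the smallest value in $[0,1]$ such that $\theta>\theta_u$ implies $\lim_n\rho=0$. *)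

(* Defs.v *)
From HB Require Import structures.
From mathcomp Require Import all_boot all_order all_algebra all_fingroup.
From mathcomp Require Import all_classical all_reals all_analysis.

Set Implicit Arguments.
Unset Strict Implicit.
Unset Printing Implicit Defensive.
Import Order.TTheory GRing.Theory Num.Theory.

(* Candidates are 'I_m (candidate i stands for i+1), voters are 'I_n.
   A ranking (strict total order on candidates) is a permutation r of 'I_m
   giving the position of each candidate: r c = 0 means c is ranked first. *)
Definition ranking (m : nat) := {perm 'I_m}.

Definition prefers (m : nat) (r : ranking m) (c d : 'I_m) : bool := r c < r d.

Definition profile (m n : nat) := {ffun 'I_n -> ranking m}.

Definition plu_score (m n : nat) (K : {set 'I_m}) (P : profile m n) (c : 'I_m) : nat :=
  #|[set v : 'I_n | (c \in K) && [forall d in K, (d != c) ==> prefers (P v) c d]]|.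

Definition min_plu (m n : nat) (K : {set 'I_m}) (P : profile m n) : {set 'I_m} :=
  [set c in K | [forall d in K, plu_score K P c <= plu_score K P d]].

Definition valid_tiebreak (m : nat) (tb : {set 'I_m} -> {set 'I_m} -> 'I_m) : Prop :=
  forall K T : {set 'I_m}, T != finset.set0 -> tb K T \in T.

Definition irv_step (m n : nat) (tb : {set 'I_m} -> {set 'I_m} -> 'I_m)
  (P : profile m n) (K : {set 'I_m}) : {set 'I_m} :=
  K :\ tb K (min_plu K P).

Definition irv_set (m n : nat) (tb : {set 'I_m} -> {set 'I_m} -> 'I_m)
  (P : profile m n) : {set 'I_m} :=
  iter m.-1 (irv_step tb P) [set: 'I_m].

(* IRV winner (always Some _ when m >= 1 and tb is valid). *)
Definition irv (m n : nat) (tb : {set 'I_m} -> {set 'I_m} -> 'I_m)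
  (P : profile m n) : option 'I_m :=
  [pick c in irv_set tb P].

Definition oprefers (m : nat) (r : ranking m) (a b : option 'I_m) : bool :=
  match a, b with
  | Some c, Some d => prefers r c d
  | _, _ => false
  end.

Definition CM (m n : nat) (f : profile m n -> option 'I_m) (P : profile m n) : Prop :=
  exists Q : profile m n,
    f Q <> f P /\
    forall v : 'I_n, Q v != P v -> oprefers (P v) (f Q) (f P).

Local Open Scope ring_scope.

(* Perturbed Culture: probability of a single ranking, with 1 = identity
   permutation = ranking 1 > 2 > ... > m. There are m! rankings. *)
Definition pc_rank_prob (R : realType) (m : nat) (theta : R) (r : ranking m) : R :=
  (if r == 1%g then theta else 0) + (1 - theta) / (m`!)%:R.

Definition pc_prob (R : realType) (m n : nat) (theta : R) (P : profile m n) : R :=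
  \prod_(v : 'I_n) pc_rank_prob theta (P v).

Definition rho (R : realType) (m n : nat) (f : profile m n -> option 'I_m) (theta : R) : R :=
  \sum_(P : profile m n | `[< CM f P >]) pc_prob theta P.

(* Main.v *)
Require Import Defs.
From HB Require Import structures.
From mathcomp Require Import all_boot all_order all_algebra all_fingroup.
From mathcomp Require Import all_classical all_reals all_analysis.
From mathcomp Require Import zify ring lra.
Import Order.TTheory GRing.Theory Num.Theory.
Import numFieldNormedType.Exports.
Set Implicit Arguments.
Unset Strict Implicit.

Section Det.
Variables (m n : nat) (tb : {set 'I_m} -> {set 'I_m} -> 'I_m).
Hypothesis Htb : valid_tiebreak tb.

Definition topc (K : {set 'I_m}) (r : ranking m) (d : 'I_m) : bool :=
  (d \in K) && [forall e in K, (e != d) ==> prefers r d e].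

Lemma x_top_uniq K r d1 d2 : topc K r d1 -> topc K r d2 -> d1 = d2.
Proof.
case/andP=> d1K /forall_inP H1; case/andP=> d2K /forall_inP H2.
apply/eqP; apply/negPn/negP => ne.
have := H1 _ d2K; rewrite eq_sym ne /= /prefers => h1.
have := H2 _ d1K; rewrite ne /= /prefers => h2. lia.
Qed.

Lemma plu_scoreE (K : {set 'I_m}) (P : profile m n) d :
  plu_score K P d = \sum_(v : 'I_n) (topc K (P v) d : nat).
Proof.
rewrite /plu_score -sum1_card big_mkcond /=; apply: eq_bigr => v _.
by rewrite inE /topc; case: (_ && _).
Qed.

Lemma x_sum_plu (K : {set 'I_m}) (P : profile m n) : \sum_(d in K) plu_score K P d <= n.
Proof.
under eq_bigr do rewrite plu_scoreE.
rewrite exchange_big /=.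
apply: (@leq_trans (\sum_(v : 'I_n) 1)); last by rewrite sum1_card card_ord.
apply: leq_sum => v _.
rewrite -big_mkcondr /=.
have -> : \sum_(d in K | topc K (P v) d) 1 = #|[pred d in K | topc K (P v) d]|.
  by rewrite sum1_card.
apply/card_le1_eqP => x y; rewrite !inE => /andP[_ Hx] /andP[_ Hy].
exact: (x_top_uniq Hy Hx).
Qed.

Lemma x_min_plu_neq0 (K : {set 'I_m}) (P : profile m n) :
  K != finset.set0 -> min_plu K P != finset.set0.
Proof.
case/set0Pn => x xK; apply/set0Pn.
exists [arg min_(c < x in K) plu_score K P c].
case: arg_minnP => // c cK Hc.
by rewrite inE cK; apply/forall_inP => d dK; exact: Hc.
Qed.

Lemma x_step_in (K : {set 'I_m}) (P : profile m n) :
  K != finset.set0 -> tb K (min_plu K P) \in min_plu K P.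
Proof. by move=> /(x_min_plu_neq0 P) /(Htb K). Qed.

Definition itr (P : profile m n) k := iter k (irv_step tb P) [set: 'I_m].

Lemma it_card (P : profile m n) k : k <= m.-1 -> #|itr P k| = m - k.
Proof.
elim: k => [|k IH] hk; first by rewrite /itr /= cardsT card_ord subn0.
have hc := IH (ltnW hk).
have ne : itr P k != finset.set0.
  by apply/negP => /eqP e; move: hc; rewrite e cards0; lia.
have := x_step_in P ne; rewrite inE => /andP[eK _].
rewrite /itr /= /irv_step -/(itr P k).
move: hc; rewrite (cardsD1 (tb (itr P k) (min_plu (itr P k) P))) eK /=.
by rewrite subnS => <-.
Qed.

Lemma it_sub (P : profile m n) j k : k <= j -> itr P j \subset itr P k.
Proof.
elim: j => [|j IH]; first by rewrite leqn0 => /eqP ->.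
rewrite leq_eqVlt => /orP[/eqP -> //|hk].
apply: fintype.subset_trans (IH hk).
by rewrite /itr /= /irv_step subsetDl.
Qed.

Lemma x_survive (P : profile m n) w :
  (forall k, k < m.-1 -> w \in itr P k -> n < #|itr P k| * plu_score (itr P k) P w) ->
  forall k, k <= m.-1 -> w \in itr P k.
Proof.
move=> H; elim => [|k IH] hk; first by rewrite /itr /= inE.
have wK := IH (ltnW hk).
have ne : itr P k != finset.set0 by apply/set0Pn; exists w.
rewrite /itr /= /irv_step -/(itr P k) !inE wK andbT.
apply/negP => /eqP ew.
have := x_step_in P ne; rewrite -ew inE => /andP[_ /forall_inP Hmin].
have := H k hk wK.
have := x_sum_plu (itr P k) P.
have : \sum_(d in itr P k) plu_score (itr P k) P w <= \sum_(d in itr P k) plu_score (itr P k) P d.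
  by apply: leq_sum => d dK; exact: Hmin.
rewrite sum_nat_const. lia.
Qed.

Lemma irv_some (P : profile m n) w : 1 <= m -> w \in irv_set tb P -> irv tb P = Some w.
Proof.
move=> m1 wI.
have : #|irv_set tb P| == 1.
  by rewrite /irv_set -/(itr P m.-1) it_card //; apply/eqP; lia.
case/cards1P => x ex.
rewrite /irv ex; move: wI; rewrite ex inE => /eqP ->.
case: pickP => [c|]; first by rewrite inE => /eqP ->.
by move/(_ x); rewrite inE eqxx.
Qed.

Lemma irv_in (P : profile m n) c : irv tb P = Some c -> c \in irv_set tb P.
Proof. by rewrite /irv; case: pickP => // c' h [<-]. Qed.

Lemma noCM (P : profile m n) w : 1 <= m ->
  (forall K : {set 'I_m}, w \in K -> 1 < #|K| -> n < #|K| * plu_score K P w) ->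
  ~ CM (irv tb) P.
Proof.
move=> m1 H.
have HP : irv tb P = Some w.
  apply: irv_some => //; apply: x_survive => // k hk wK; apply: H => //.
  by rewrite it_card; lia.
case => Q [neq Hv]; rewrite HP in neq Hv.
case: (boolP [exists v, Q v != P v]) => [/existsP [v hv]|].
  have := Hv v hv.
  case eQ: (irv tb Q) => [c|] //= pref.
  have cw : c != w by apply/eqP => e; apply: neq; rewrite eQ e.
  have cI := irv_in eQ.
  suff : irv tb Q = Some w by rewrite eQ => -[e]; move: cw; rewrite e eqxx.
  apply: irv_some => //; apply: x_survive => // k hk wK.
  have cK : c \in itr Q k.
    by apply: (fintype.subsetP (it_sub Q (ltnW hk))); exact: cI.
  have hc : 1 < #|itr Q k| by rewrite it_card; lia.
  apply: (leq_trans (H _ wK hc)); rewrite leq_mul2l; apply/orP; right.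
  apply: subset_leq_card; apply/fintype.subsetP => u; rewrite !inE.
  case/andP=> -> /forall_inP Ht /=.
  have eu : Q u = P u.
    apply/eqP; apply/negPn/negP => hu.
    have := Hv u hu; rewrite eQ /= => hcw.
    have := Ht c cK; rewrite cw /= /prefers. move: hcw; rewrite /prefers. lia.
  by rewrite eu; apply/forall_inP.
rewrite negb_exists => /forallP hQ.
have eQP : Q = P by apply/ffunP => v; apply/eqP; move: (hQ v); rewrite negbK.
by apply: neq; rewrite eQP.
Qed.

End Det.
Section Cnt.
Variables (m : nat).

Lemma x_top_exists (K : {set 'I_m}) (r : ranking m) x : x \in K ->
  exists d, topc K r d.
Proof.
move=> xK.
exists [arg min_(d < x in K) (r d : nat)].
case: arg_minnP => // d dK Hd.
rewrite /topc dK /=; apply/forall_inP => e eK; apply/implyP => ne.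
rewrite /prefers.
have := Hd e eK; rewrite leq_eqVlt => /orP[/eqP h|//].
by move: ne; rewrite (perm_inj (val_inj h)) eqxx.
Qed.

Lemma x_top_swap (K : {set 'I_m}) (r : ranking m) w d : w \in K ->
  topc K r d -> topc K (tperm w d * r)%g w.
Proof.
move=> wK /andP[dK /forall_inP H].
rewrite /topc wK /=; apply/forall_inP => e eK; apply/implyP => ne.
rewrite /prefers !permM tpermL.
move: ne; case: (eqVneq e d) => [->|ned] ne.
  rewrite tpermR.
  case: (eqVneq w d) => [wd|wd]; first by move: ne; rewrite wd eqxx.
  by have := H w wK; rewrite wd.
by rewrite tpermD // 1?eq_sym //; have := H e eK; rewrite ned.
Qed.

Lemma x_card_top_le (K : {set 'I_m}) w d : w \in K ->
  #|[set r : ranking m | topc K r d]| <= #|[set r : ranking m | topc K r w]|.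
Proof.
move=> wK.
rewrite -(card_imset _ (mulgI (tperm w d))).
apply: subset_leq_card; apply/fintype.subsetP => r' /imsetP [r]; rewrite inE => Hr ->.
by rewrite inE; apply: x_top_swap.
Qed.

Lemma x_card_top (K : {set 'I_m}) w : w \in K ->
  m`! <= #|K| * #|[set r : ranking m | topc K r w]|.
Proof.
move=> wK.
rewrite -sum_nat_const.
apply: (@leq_trans (\sum_(d in K) #|[set r : ranking m | topc K r d]|)); last first.
  by apply: leq_sum => d _; exact: x_card_top_le.
rewrite -card_Sn -sum1_card.
under [X in _ <= X]eq_bigr => d _ do rewrite -sum1_card big_mkcond /=.
rewrite exchange_big /=; apply: leq_sum => r _.
case: (x_top_exists r wK) => d Hd.
rewrite (bigD1 d) /=; last by case/andP: Hd.
by rewrite inE Hd.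
Qed.
End Cnt.
Section Rate.
Local Open Scope ring_scope.
Variable R : realFieldType.

Lemma x_bernoulli (e : R) (j : nat) : 0 <= e <= 1 -> 1 - j%:R * e <= (1 - e) ^+ j.
Proof.
case/andP=> e0 e1; elim: j => [|j IH]; first by rewrite expr0 mul0r subr0.
rewrite exprS -natr1.
have h : 0 <= (1 - e) ^+ j by rewrite exprn_ge0 // subr_ge0.
set x := (1 - e) ^+ j in IH h *; set J := j%:R in IH *.
have hJ : 0 <= J by rewrite ler0n.
nra.
Qed.

Lemma x_geo (s : R) (j : nat) : 0 <= s <= 1 -> j%:R * (1 - s) * s ^+ j <= 1 - s ^+ j.
Proof.
case/andP=> s0 s1; elim: j => [|j IH]; first by rewrite expr0 !mul0r subrr.
rewrite exprS -natr1.
have h : 0 <= s ^+ j by rewrite exprn_ge0.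
have h1 : s ^+ j <= 1 by rewrite exprn_ile1.
set x := s ^+ j in IH h h1 *; set J := j%:R in IH *.
have hJ : 0 <= J by rewrite ler0n.
have h2 : 0 <= (J + 1) * (1 - s) * x * (1 - s).
  by repeat apply: mulr_ge0 => //; lra.
nra.
Qed.

Lemma x_rate (p theta : R) (k : nat) : (2 <= k)%N -> 0 < theta -> theta <= 1 ->
  0 <= p -> p <= 1 -> 1 + theta <= p * k%:R ->
  let s := 1 - theta / (2 * k%:R * (1 + theta)) in
  [/\ 0 < s, s <= 1, 0 <= (1 - p + p * s ^+ k) / s &
                 (1 - p + p * s ^+ k) / s < 1].
Proof.
move=> k2 t0 t1 p0 p1 hp s.
have kpos : (2 : R) <= k%:R by rewrite (ler_nat R 2 k).
set K := k%:R in kpos hp *.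
set e := theta / (2 * K * (1 + theta)).
have den : 0 < 2 * K * (1 + theta) by apply: mulr_gt0; [apply: mulr_gt0|]; lra.
have e0 : 0 < e by apply: divr_gt0.
have ke : K * e = theta / (2 * (1 + theta)).
  rewrite /e; field; apply/andP; split; apply/eqP; lra.
have ke1 : K * e * (2 * (1 + theta)) = theta.
  by rewrite ke divfK //; apply/eqP; lra.
have e1 : e <= 1 / 4 by nra.
rewrite /s -/e.
have s0 : 0 < 1 - e by lra.
have sk0 : 0 <= (1 - e) ^+ k by rewrite exprn_ge0 // ltW.
have sk1 : (1 - e) ^+ k <= 1 by rewrite exprn_ile1 // ?ltW //; lra.
have B := @x_bernoulli e k.
have G := @x_geo (1 - e) k.
have hB : 1 - K * e <= (1 - e) ^+ k by apply: B; apply/andP; split; lra.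
have hG : K * (1 - (1 - e)) * (1 - e) ^+ k <= 1 - (1 - e) ^+ k.
  by apply: G; apply/andP; split; lra.
set x := (1 - e) ^+ k in sk0 sk1 hB hG *.
split => //; first by lra.
  by apply: divr_ge0; [nra | lra].
rewrite ltr_pdivrMr //.
have h1 : 1 + theta / 2 <= p * K * x.
  have : (1 + theta) * (1 - K * e) <= p * K * x by nra.
  suff : 1 + theta / 2 = (1 + theta) * (1 - K * e) by move=> ->.
  rewrite ke; field; apply/eqP; lra.
have : e < p * (1 - x) by nra.
lra.
Qed.
End Rate.
Section Prob.
Local Open Scope ring_scope.
Variables (R : realType) (m : nat) (theta : R).
Hypothesis (Hth0 : 0 <= theta) (Hth1 : theta <= 1).

Local Notation q := (@pc_rank_prob R m theta).

Lemma x_fact_neq0 : (m`!)%:R != 0 :> R.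
Proof. by rewrite pnatr_eq0 -lt0n fact_gt0. Qed.

Lemma x_q_ge0 r : 0 <= q r.
Proof.
rewrite /pc_rank_prob; apply: addr_ge0; first by case: ifP.
by apply: divr_ge0; rewrite ?subr_ge0 // ler0n.
Qed.

Lemma x_q_sum : \sum_(r : ranking m) q r = 1.
Proof.
rewrite /pc_rank_prob big_split /= (bigD1 1%g) //= eqxx big1 => [|r /negbTE -> //].
rewrite sumr_const card_Sn addr0 -[X in _ + X]mulr_natr divfK ?x_fact_neq0 //.
by rewrite addrC subrK.
Qed.

Definition xpA (K : {set 'I_m}) w := \sum_(r : ranking m | topc K r w) q r.

Lemma pA_ge0 K w : 0 <= xpA K w.
Proof. by apply: sumr_ge0 => r _; exact: x_q_ge0. Qed.

Lemma pA_le1 K w : xpA K w <= 1.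
Proof.
rewrite -x_q_sum /xpA [X in _ <= X](bigID (fun r => topc K r w)) /= lerDl.
by apply: sumr_ge0 => r _; exact: x_q_ge0.
Qed.

Lemma pA_low (K : {set 'I_m}) (w : 'I_m) : (w : nat) = 0%N -> w \in K ->
  theta + (1 - theta) / (#|K|%:R) <= xpA K w.
Proof.
move=> w0 wK.
have top1 : topc K 1%g w.
  rewrite /topc wK /=; apply/forall_inP => e _; apply/implyP => ne.
  rewrite /prefers !perm1 w0 lt0n; apply/negP => /eqP e0.
  by move: ne; rewrite (_ : e = w) ?eqxx //; apply: val_inj; rewrite /= e0 w0.
rewrite /xpA /pc_rank_prob big_split /= (bigD1 1%g) //= eqxx big1 => [|r /andP[_ /negbTE -> //]].
rewrite addr0 sumr_const lerD2l.
have hK : (0 < #|K|)%N by apply/card_gt0P; exists w.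
have hc := x_card_top wK.
set c := #|[set r : ranking m | topc K r w]| in hc.
have -> : #|[pred r : ranking m | topc K r w]| = c by rewrite /c cardsE.
rewrite -[X in _ <= X]mulr_natr -mulrA; apply: ler_wpM2l; first by rewrite subr_ge0.
have hM : (0:R) < (m`!)%:R by rewrite ltr0n fact_gt0.
rewrite [X in _ <= X]mulrC ler_pdivlMr // ler_pdivrMl ?ltr0n //.
by rewrite -natrM ler_nat.
Qed.

Lemma x_expr_anti (s : R) (a b : nat) : 0 <= s -> s <= 1 -> (a <= b)%N -> s ^+ b <= s ^+ a.
Proof.
move=> s0 s1 ab; rewrite -(subnK ab) exprD ler_piMl ?exprn_ge0 //.
exact: exprn_ile1.
Qed.

Variable n : nat.

Lemma pc_prob_ge0 (P : profile m n) : 0 <= pc_prob theta P.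
Proof. by apply: prodr_ge0 => v _; exact: x_q_ge0. Qed.

Lemma x_sum_prod (G : ranking m -> R) :
  \sum_(P : profile m n) \prod_(v : 'I_n) G (P v) = (\sum_(r : ranking m) G r) ^+ n.
Proof.
by rewrite -(bigA_distr_bigA (fun (v : 'I_n) r => G r)) /= prodr_const card_ord.
Qed.

Lemma x_sum_qt (K : {set 'I_m}) w (t : R) :
  \sum_(r : ranking m) q r * (if topc K r w then t else 1) = 1 - xpA K w + xpA K w * t.
Proof.
rewrite (bigID (fun r => topc K r w)) /=.
have := x_q_sum; rewrite (bigID (fun r => topc K r w)) /= -/(xpA K w) => hq.
have -> : \sum_(i | topc K i w) q i * (if topc K i w then t else 1) = xpA K w * t.
  by rewrite /xpA big_distrl /=; apply: eq_bigr => r ->.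
have -> : \sum_(i | ~~ topc K i w) q i * (if topc K i w then t else 1) = 1 - xpA K w.
  rewrite (_ : 1 - xpA K w = \sum_(i | ~~ topc K i w) q i); last by rewrite -hq addrAC subrr add0r.
  by apply: eq_bigr => r /negbTE ->; rewrite mulr1.
by rewrite addrC.
Qed.

Lemma x_chernoff (K : {set 'I_m}) w (k : nat) (s : R) : 0 < s -> s <= 1 ->
  \sum_(P : profile m n | (k * plu_score K P w <= n)%N) pc_prob theta P
    <= ((1 - xpA K w + xpA K w * s ^+ k) / s) ^+ n.
Proof.
move=> s0 s1.
set t := s ^+ k.
have step : forall P : profile m n, pc_prob theta P * t ^+ (plu_score K P w)
    = \prod_(v : 'I_n) (q (P v) * (if topc K (P v) w then t else 1)).
  move=> P; rewrite plu_scoreE expr_sum /pc_prob -big_split /=.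
  by apply: eq_bigr => v _; case: topc; rewrite ?expr1 ?expr0.
have sn0 : 0 < s ^+ n by rewrite exprn_gt0.
apply: (@le_trans _ _ (\sum_(P : profile m n) pc_prob theta P * t ^+ (plu_score K P w) / s ^+ n)).
  rewrite [X in _ <= X](bigID (fun P : profile m n => (k * plu_score K P w <= n)%N)) /=.
  rewrite -[X in X <= _]addr0; apply: lerD; last first.
    apply: sumr_ge0 => P _; apply: divr_ge0; last exact: ltW.
    by apply: mulr_ge0; [exact: pc_prob_ge0 | rewrite exprn_ge0 // exprn_ge0 // ltW].
  apply: ler_sum => P hP.
  rewrite -mulrA -[X in X <= _]mulr1; apply: ler_wpM2l; first exact: pc_prob_ge0.
  rewrite ler_pdivlMr // mul1r /t -exprM.
  by apply: x_expr_anti => //; exact: ltW.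
rewrite -big_distrl /=.
under eq_bigr do rewrite step.
by rewrite (x_sum_prod (fun r => q r * (if topc K r w then t else 1))) x_sum_qt expr_div_n.
Qed.
End Prob.

Local Open Scope classical_set_scope.
Local Open Scope ring_scope.

Theorem theorem5p3 (R : realType) (m : nat) (tb : {set 'I_m} -> {set 'I_m} -> 'I_m)
  (theta : R) :
  (1 <= m)%N -> valid_tiebreak tb -> 0 < theta <= 1 ->
  (fun n : nat => rho (@irv m n tb) theta) @ \oo --> (0 : R).
Proof.
move=> m1 Htb /andP[t0 t1].
have t0' : 0 <= theta by apply: ltW.
pose w : 'I_m := Ordinal m1.
have w0 : (w : nat) = 0%N by [].
pose cond (K : {set 'I_m}) := (w \in K) && (1 < #|K|)%N.
pose sK (K : {set 'I_m}) : R := 1 - theta / (2 * #|K|%:R * (1 + theta)).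
pose rK (K : {set 'I_m}) : R :=
  (1 - xpA theta K w + xpA theta K w * sK K ^+ #|K|) / sK K.
have HK : forall K, cond K -> [/\ 0 < sK K, sK K <= 1, 0 <= rK K & rK K < 1].
  move=> K /andP[wK k2].
  apply: x_rate => //; [exact: pA_ge0 | exact: pA_le1 |].
  have hl := pA_low t1 w0 wK.
  have kpos : (2 : R) <= #|K|%:R by rewrite (ler_nat R 2 #|K|).
  have k0 : (0 : R) < #|K|%:R by lra.
  have : theta * #|K|%:R + (1 - theta) <= xpA theta K w * #|K|%:R.
    have := ler_wpM2r (ltW k0) hl.
    by rewrite mulrDl divfK //; apply/eqP; lra.
  nra.
have bound : forall n, rho (@irv m n tb) theta <= \sum_(K | cond K) rK K ^+ n.
  move=> n.
  apply: (@le_trans _ _ (\sum_(K | cond K)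
     \sum_(P : profile m n | (#|K| * plu_score K P w <= n)%N) pc_prob theta P)); last first.
    apply: ler_sum => K hK; have [s0 s1 _ _] := HK K hK.
    exact: x_chernoff.
  apply: (@le_trans _ _ (\sum_(P : profile m n) \sum_(K | cond K)
     (if (#|K| * plu_score K P w <= n)%N then pc_prob theta P else 0))); last first.
    rewrite exchange_big /=; apply: ler_sum => K _.
    by rewrite [X in _ <= X]big_mkcond.
  rewrite /rho [X in _ <= X](bigID (fun P : profile m n => `[< CM (irv tb) P >])) /=.
  rewrite -[X in X <= _]addr0; apply: lerD; last first.
    apply: sumr_ge0 => P _; apply: sumr_ge0 => K _; case: ifP => // _.
    exact: pc_prob_ge0.
  apply: ler_sum => P /asboolP hP.
  have : [exists K, cond K && (#|K| * plu_score K P w <= n)%N].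
    case: (boolP [exists K, cond K && (#|K| * plu_score K P w <= n)%N]) => // hn.
    exfalso; move: hn; rewrite negb_exists => /forallP hn.
    apply: (noCM Htb (w := w) m1) hP.
    move=> K wK k2; have := hn K; rewrite /cond wK k2 /= -ltnNge; exact.
  case/existsP => K0 /andP[c0 b0].
  rewrite (bigD1 K0) //= b0 -[X in X <= _]addr0 lerD2l.
  apply: sumr_ge0 => K _; case: ifP => // _; exact: pc_prob_ge0.
apply: (@squeeze_cvgr _ _ _ _ (cst 0) (fun n => \sum_(K | cond K) rK K ^+ n)).
- apply: nearW => n; rewrite bound andbT.
  by apply: sumr_ge0 => P _; exact: pc_prob_ge0.
- exact: cvg_cst.
- have hc : forall K, cond K -> (fun n => rK K ^+ n) @ \oo --> (0:R).
    move=> K hK; have [_ _ r0 r1] := HK K hK.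
    by apply: cvg_expr; rewrite ger0_norm.
  have := @cvg_big R {set 'I_m} +%R 0 cond add_continuous _ \oo (index_enum _)
     (fun K n => rK K ^+ n) (fun=> 0) _ hc.
  move=> h; rewrite big1 // in h; apply: h; exact: _.
Qed.
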